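(* There is an absolute constant $C$ such that the following holds: if $\Gamma$ is the incidence graph of a $(v,k,\lambda)$ symmetric design of order $q=k-\lambda\geq 2$, and $n=2v$ is the number of vertices of $\Gamma$, then $\mu(\Gamma)\leq C\sqrt{n}\log n$; that is, $\mu(\Gamma)=O(\sqrt{n}\log n)$.
   Context: A symmetric design with parameters $(v,k,\lambda)$ is a pair $(X,\mathcal{B})$ where $X$ is a set of $v$ points and $\mathcal{B}$ is a family of $k$-subsets of $X$ (blocks) such that any two distinct points lie in exactly $\lambda$ blocks and any two distinct blocks meet in exactly $\lambda$ points. Its order is $q=k-\lambda$. Its incidence graph is the bipartite graph on $X\cup\mathcal{B}$ with $x$ adjacent to $B$ iff $x\in B$. A resolving set of a connected graph is a set $S$ of vertices such that for any two distinct vertices $u,w$ some $s\in S$ has $d(u,s)\neq d(w,s)$; the metric dimension $\mu(\Gamma)$ is the minimum size of a resolving set. *)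

(* Defs.v *)
From mathcomp Require Import all_boot.
From Stdlib Require Import Reals.
Set Implicit Arguments. Unset Strict Implicit. Unset Printing Implicit Defensive.

Definition symmetric_design (v k lam : nat) (blk : 'I_v -> {set 'I_v}) : Prop :=
  [/\ forall B, #|blk B| = k,
      forall x y : 'I_v, x != y ->
        #|[set B | (x \in blk B) && (y \in blk B)]| = lam &
      forall B B' : 'I_v, B != B' -> #|blk B :&: blk B'| = lam].

Definition inc_adj (v : nat) (blk : 'I_v -> {set 'I_v}) : rel ('I_v + 'I_v) :=
  fun a b => match a, b with
  | inl x, inr B => x \in blk B
  | inr B, inl x => x \in blk B
  | _, _ => false
  end.

Section Graph.
Variables (V : finType) (adj : rel V).

Fixpoint walk (n : nat) (u w : V) : bool :=
  match n with
  | 0 => u == w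
  | n'.+1 => [exists z, adj u z && walk n' z w]
  end.

(* graph distance: least n with a walk of length n (#|V| if unreachable;
   irrelevant for connected graphs) *)
Definition gdist (u w : V) : nat := find (fun n => walk n u w) (iota 0 #|V|).

Definition resolving (S : {set V}) : bool :=
  [forall u, forall w, (u != w) ==> [exists s in S, gdist u s != gdist w s]].

Definition metric_dim : nat :=
  #|[arg min_(S < [set: V] | resolving S) #|S|]|.
End Graph.

(* Main.v *)
Require Import Defs.
From mathcomp Require Import all_boot.
From Stdlib Require Import Reals.
From Stdlib Require Import ZArith Lra Psatz.
From mathcomp Require Import all_boot zify.
Set Implicit Arguments. Unset Strict Implicit. Unset Printing Implicit Defensive.
Delimit Scope R_scope with R.

Section Cover.
Variables (V X : finType) (sep : V -> X -> bool) (d h : nat) (v0 : V).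
Hypothesis hd : #|V| <= h * d.

Definition uncov (P : {set X}) (T : {set V}) :=
  [set x in P | [forall s in T, ~~ sep s x]].

Lemma card_sum_nat (T : finType) (p : pred T) : #|[set x | p x]| = \sum_x (p x : nat).
Proof. by rewrite -sum1dep_card big_mkcond /=; apply: eq_bigr => i _; case: (p i). Qed.

Lemma avg (U : {set X}) :
  (forall x, x \in U -> d <= #|[set s | sep s x]|) ->
  exists s, d * #|U| <= #|V| * #|[set x in U | sep s x]|.
Proof.
move=> HU.
set c := fun s => #|[set x in U | sep s x]|.
have [s _ Hs] := @arg_maxnP V v0 xpredT c isT.
exists s.
have E : \sum_(s0 : V) c s0 = \sum_(x in U) #|[set s0 | sep s0 x]|.
  rewrite /c.
  under eq_bigr => s0 _ do rewrite card_sum_nat.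
  rewrite exchange_big /= [RHS]big_mkcond /=.
  apply: eq_bigr => x _.
  case: (boolP (x \in U)) => xU.
    by rewrite card_sum_nat; apply: eq_bigr => s0 _.
  by apply: big1.
have L1 : d * #|U| <= \sum_(s0 : V) c s0.
  rewrite E -sum1_card big_distrr /=.
  by apply: leq_sum => x xU; rewrite muln1; apply: HU.
have L2 : \sum_(s0 : V) c s0 <= #|V| * c s.
  rewrite -sum1_card big_distrl /=.
  by apply: leq_sum => s0 _; rewrite mul1n; apply: Hs.
exact: leq_trans L1 L2.
Qed.

Hypothesis cov : forall x, d <= #|[set s | sep s x]|.

Lemma uncov_step (P : {set X}) T s :
  uncov P (s |: T) = [set x in uncov P T | ~~ sep s x].
Proof.
apply/setP => x; rewrite !inE.
apply/idP/idP.
  move/andP=> [xP /forallP H]; rewrite xP /=.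
  have := H s; rewrite !inE eqxx /= => ->; rewrite andbT.
  apply/forallP => t; apply/implyP => tT.
  by have := H t; rewrite !inE tT orbT.
move/andP=> [/andP [xP /forallP H] ns]; rewrite xP /=.
apply/forallP => t; rewrite !inE; apply/implyP => /orP [/eqP -> //|tT].
by have := H t; rewrite tT.
Qed.

Lemma uncov_sub P T : uncov P T \subset P.
Proof. by apply/subsetP => x; rewrite inE => /andP []. Qed.

Lemma halving_gen (P : {set X}) j : j <= h ->
  exists T : {set V}, #|T| <= j /\
    (2 * #|uncov P T| <= #|P| \/ j * #|P| <= 2 * h * (#|P| - #|uncov P T|)).
Proof.
elim: j => [|j IH] Hj.
  by exists set0; rewrite cards0; split => //; right; rewrite mul0n.
have [T [HT Hor]] := IH (ltnW Hj).
case: (leqP (2 * #|uncov P T|) #|P|) => H2.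
  by exists T; split; [exact: leqW | left].
case: Hor => [H2'|Hor]; first by move: H2'; rewrite leqNgt H2.
set U := uncov P T.
have [s Hs] := @avg U (fun x _ => cov x).
exists (s |: T); split.
  by rewrite cardsU1; case: (s \in T) => /=; lia.
right.
rewrite uncov_step -/U.
have Hc : #|[set x in U | sep s x]| + #|[set x in U | ~~ sep s x]| = #|U|.
  rewrite -(cardsID [set x | sep s x] U).
  congr (_ + _); apply: eq_card => x; rewrite !inE //; by case: (sep s x); rewrite /= ?andbF ?andbT.
have HUP : #|U| <= #|P| by apply: subset_leq_card; apply: uncov_sub.
have hpos : 0 < h by move: Hj; case: h.
set c := #|[set x in U | sep s x]| in Hs Hc.
set c' := #|[set x in U | ~~ sep s x]| in Hc *.
have Hhc : #|U| <= h * c.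
  have Vpos : 0 < #|V| by apply/card_gt0P; exists v0.
  have dpos : 0 < d by move: hd Vpos; case: d => //; rewrite muln0; case: #|V|.
  have : d * #|U| <= d * (h * c) by apply: (leq_trans Hs); rewrite mulnA [d * h]mulnC; exact: leq_mul hd (leqnn c).
  by rewrite leq_pmul2l.
have -> : #|P| - c' = (#|P| - #|U|) + c by lia.
rewrite mulnDr.
move: Hor Hhc H2; rewrite -/U.
set A := 2 * h * (#|P| - #|U|); set B := h * c.
have -> : 2 * h * c = 2 * B by rewrite /B mulnA.
rewrite mulSn. lia.
Qed.

Lemma halving (P : {set X}) : 0 < h ->
  exists T : {set V}, #|T| <= h /\ 2 * #|uncov P T| <= #|P|.
Proof.
move=> hpos.
have [T [HT [H|H]]] := @halving_gen P h (leqnn h); exists T; split => //.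
have HUP : #|uncov P T| <= #|P| by apply: subset_leq_card; apply: uncov_sub.
have H' : h * #|P| <= h * (2 * (#|P| - #|uncov P T|)) by rewrite mulnA [h * 2]mulnC.
move: H'; rewrite leq_pmul2l // => H'; lia.
Qed.

Lemma cover_exp e : 0 < h -> forall P : {set X}, #|P| < 2 ^ e ->
  exists S : {set V}, #|S| <= h * e /\ uncov P S = set0.
Proof.
move=> hpos; elim: e => [|e IH] P HP.
  exists set0; rewrite cards0; split => //.
  apply/eqP; rewrite -subset0; apply: (subset_trans (uncov_sub _ _)).
  by rewrite subset0 -cards_eq0; move: HP; rewrite expn0; case: #|P|.
have [T [HT HU]] := halving P hpos.
have HU' : #|uncov P T| < 2 ^ e by rewrite expnS in HP; lia.
have [S [HS HS0]] := IH _ HU'.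
exists (T :|: S); split.
  apply: (leq_trans (leq_card_setU _ _)); rewrite mulnS; exact: leq_add.
apply/eqP; rewrite -subset0 -HS0; apply/subsetP => x; rewrite !inE.
move=> /andP [xP /forallP H]; rewrite xP /=.
  apply/andP; split.
    by apply/forallP => t; apply/implyP => tT; have := H t; rewrite !inE tT.
  by apply/forallP => t; apply/implyP => tT; have := H t; rewrite !inE tT orbT.
Qed.
End Cover.

Lemma walk_gdist (V : finType) (adj : rel V) u w n : n < #|V| -> walk adj n u w ->
  walk adj (gdist adj u w) u w /\ gdist adj u w <= n.
Proof.
move=> Hn Hw.
have Hhas : has (fun m => walk adj m u w) (iota 0 #|V|).
  by apply/hasP; exists n => //; rewrite mem_iota.
have Hlt : gdist adj u w < #|V| by rewrite /gdist; move: Hhas; rewrite has_find size_iota.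
split.
  by have := nth_find 0 Hhas; rewrite nth_iota // add0n.
rewrite leqNgt; apply/negP => lt.
by have := before_find 0 lt; rewrite nth_iota ?add0n ?Hw // (ltn_trans lt).
Qed.

Definition side (v : nat) (u : 'I_v + 'I_v) : bool := if u is inl _ then true else false.

Lemma walk_odd v (blk : 'I_v -> {set 'I_v}) n u w :
  walk (inc_adj blk) n u w -> odd n = (side u != side w).
Proof.
elim: n u => [|n IH] u /=; first by move/eqP => ->; rewrite eqxx.
move/existsP => [z /andP [Huz Hz]]; rewrite (IH _ Hz).
by move: Huz; clear Hz IH; case: u => a; case: z => b //= _; case: w => c.
Qed.

Lemma gdist_adj (V : finType) (adj : rel V) u w : 1 < #|V| -> u != w -> adj u w ->
  gdist adj u w = 1.
Proof.
move=> HV Huw Ha.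
have H1 : walk adj 1 u w by apply/existsP; exists w; rewrite Ha /=.
have [Hw Hle] := walk_gdist HV H1.
move: Hw Hle; case: (gdist adj u w) => [|[|m]] //=.
by rewrite (negbTE Huw).
Qed.

Lemma gdist_nadj (V : finType) (adj : rel V) u w n : n < #|V| -> walk adj n u w -> ~~ adj u w ->
  gdist adj u w != 1.
Proof.
move=> Hn Hwalk Ha.
have [Hw _] := walk_gdist Hn Hwalk.
apply/eqP => E; move: Hw; rewrite E /= => /existsP [z /andP [Hz /eqP Ez]].
by move: Hz; rewrite Ez (negbTE Ha).
Qed.


Lemma sum_if_const (T : finType) (p : pred T) c :
  \sum_x (if p x then c else 0) = #|[set x | p x]| * c.
Proof.
rewrite -big_mkcond /= sum_nat_const; congr (_ * _).
by apply: eq_card => x; rewrite inE.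
Qed.

Section Design.
Variables (v k lam : nat) (blk : 'I_v -> {set 'I_v}).
Hypothesis Hd : symmetric_design k lam blk.
Hypothesis Hk : 2 <= k.

Lemma r_count x : #|[set B | x \in blk B]| * (k - 1) = (v - 1) * lam.
Proof.
have [Hsz Hpt Hbl] := Hd.
pose f y B := ((y != x) && (x \in blk B) && (y \in blk B) : nat).
have L : \sum_y \sum_B f y B = (v - 1) * lam.
  transitivity (\sum_(y : 'I_v) (if y != x then lam else 0)).
    apply: eq_bigr => y _; rewrite /f.
    case: (boolP (y != x)) => Hyx /=; last by rewrite big1.
    rewrite -card_sum_nat -(Hpt x y); last by rewrite eq_sym.
    by apply: eq_card => B; rewrite !inE.
  rewrite sum_if_const; congr (_ * _).
  have := cardC1 x; rewrite card_ord => H; rewrite subn1 -H.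
  by apply: eq_card => y; rewrite !inE.
have R : \sum_B \sum_y f y B = #|[set B | x \in blk B]| * (k - 1).
  transitivity (\sum_(B : 'I_v) (if x \in blk B then k - 1 else 0)).
    apply: eq_bigr => B _; rewrite /f.
    case: (boolP (x \in blk B)) => HxB /=; last first.
      by rewrite big1 // => y _; rewrite andbF.
    rewrite -card_sum_nat -(Hsz B) (cardsD1 x (blk B)) HxB add1n subn1 /=.
    by apply: eq_card => y; rewrite !inE; case: (y != x) => /=; rewrite ?HxB ?andbT.
  by rewrite sum_if_const.
by rewrite -R -L; exact: exchange_big.
Qed.

Lemma inc_count : \sum_(x : 'I_v) #|[set B | x \in blk B]| = v * k.
Proof.
have [Hsz _ _] := Hd.
pose f (x B : 'I_v) := (x \in blk B : nat).
transitivity (\sum_x \sum_B f x B).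
  by apply: eq_bigr => x _; rewrite card_sum_nat.
rewrite exchange_big /=.
transitivity (\sum_(B : 'I_v) k); last by rewrite sum_nat_const card_ord.
apply: eq_bigr => B _; rewrite -(Hsz B) -sum1_card.
by rewrite [RHS]big_mkcond; apply: eq_bigr => x _; rewrite /f; case: (x \in blk B).
Qed.

Lemma r_eq x : #|[set B | x \in blk B]| = k.
Proof.
have Hall : forall y, #|[set B | y \in blk B]| = #|[set B | x \in blk B]|.
  move=> y; apply/eqP; rewrite -(eqn_pmul2r (_ : 0 < k - 1)); last by lia.
  by rewrite !r_count.
have := inc_count.
under eq_bigr => y _ do rewrite Hall.
rewrite sum_nat_const card_ord => /eqP.
have vpos : 0 < v by exact: (leq_ltn_trans (leq0n x) (ltn_ord x)).
by rewrite eqn_pmul2l // => /eqP.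
Qed.

Lemma kk_eq (x : 'I_v) : k * (k - 1) = (v - 1) * lam.
Proof. by rewrite -{1}(r_eq x) r_count. Qed.

Lemma sep_pts x y : x != y ->
  #|[set B | (x \in blk B) && (y \notin blk B)]| = k - lam.
Proof.
have [_ Hpt _] := Hd => Hxy.
have := cardsID [set B | y \in blk B] [set B | x \in blk B].
have E1 : #|[set B | x \in blk B] :&: [set B | y \in blk B]| = lam.
  by rewrite -(Hpt x y Hxy); apply: eq_card => B; rewrite !inE.
have E2 : #|[set B | x \in blk B] :\: [set B | y \in blk B]| =
  #|[set B | (x \in blk B) && (y \notin blk B)]|.
  by apply: eq_card => B; rewrite !inE andbC.
rewrite E1 E2 r_eq; lia.
Qed.

Lemma sep_blks B B' : B != B' -> #|blk B :\: blk B'| = k - lam.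
Proof.
have [Hsz _ Hbl] := Hd => HB.
by rewrite -(Hsz B) -(Hbl B B' HB) -(cardsID (blk B') (blk B)) addKn.
Qed.
End Design.

Section AZ.
Local Open Scope Z_scope.
Lemma arithZ (l q b : Z) : 0 <= l -> 2 <= q -> 0 <= b ->
  (l + q) * (l + q - 1) = (l + q + b - 1) * l ->
  1 <= l /\ l + q + b <= 4 * (q * q).
Proof.
intros Hl Hq Hb E.
assert (Hl1 : 1 <= l).
{ destruct (Z.eq_dec l 0) as [->|]; [(timeout 15 nia)|lia]. }
split; [exact Hl1|].
set (k := l + q) in *. set (w := k + b - 1) in *.
assert (Eq : q * w = k * b) by (unfold w, k in *; (timeout 15 nia)).
assert (Hb2 : 2 <= b).
{ destruct (Z.eq_dec b 0) as [Hb0|]; [subst w; rewrite Hb0 in Eq; (timeout 15 nia)|].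
  destruct (Z.eq_dec b 1) as [Hb0|]; [subst w; rewrite Hb0 in Eq; (timeout 15 nia)|lia]. }
assert (Ha2 : w <= k * k) by (unfold w, k in *; (timeout 15 nia)).
assert (E2 : b * (b - 1) = w * (w + 1 + l - 2 * k)) by (unfold w, k in *; (timeout 15 nia)).
assert (Hb3 : w <= b * b).
{ assert (0 < w) by (unfold w, k in *; lia).
  assert (Hbb : 0 < b * (b - 1)) by (apply Z.mul_pos_pos; lia).
  rewrite E2 in Hbb.
  apply (proj1 (Z.mul_pos_cancel_l _ _ H)) in Hbb.
  assert (w * 1 <= w * (w + 1 + l - 2 * k)) by (apply Z.mul_le_mono_nonneg_l; [lia|];  lia).
  assert (b * (b - 1) <= b * b) by (apply Z.mul_le_mono_nonneg_l; lia).
  lia. }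
assert (Hmax : (k + b) * (k + b) <= 4 * (k * k) \/ (k + b) * (k + b) <= 4 * (b * b)) by (destruct (Z.le_ge_cases k b); (timeout 15 nia)).
assert (Hw : 0 < w) by (unfold w, k in *; lia).
assert (H4 : (k + b) * (k + b) * w <= 4 * (k * b) * (k * b)).
{ assert (E4 : 4*(k*b)*(k*b) = 4*(k*k)*(b*b)) by ring.
  assert (Hk0 : 0 <= k) by (unfold k; lia).
  destruct Hmax as [H|H].
  - assert ((k+b)*(k+b)*w <= (k+b)*(k+b)*(b*b)) by (apply Z.mul_le_mono_nonneg_l; [apply Z.mul_nonneg_nonneg; lia|lia]).
    assert ((k+b)*(k+b)*(b*b) <= 4*(k*k)*(b*b)) by (apply Z.mul_le_mono_nonneg_r; [apply Z.mul_nonneg_nonneg; lia|lia]).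
    lia.
  - assert ((k+b)*(k+b)*w <= (k+b)*(k+b)*(k*k)) by (apply Z.mul_le_mono_nonneg_l; [apply Z.mul_nonneg_nonneg; lia|lia]).
    assert ((k+b)*(k+b)*(k*k) <= 4*(b*b)*(k*k)) by (apply Z.mul_le_mono_nonneg_r; [apply Z.mul_nonneg_nonneg; lia|lia]).
    lia. }
rewrite <- Eq in H4.
assert (E5 : 4 * (q * w) * (q * w) = (4 * (q * q) * w) * w) by ring.
rewrite E5 in H4.
assert (H5 : (k + b) * (k + b) <= 4 * (q * q) * w) by (apply (proj2 (Z.mul_le_mono_pos_r _ _ _ Hw)); exact H4).
assert (Hkb : w + 1 = k + b) by (unfold w; lia).
rewrite <- Hkb in H5.
assert (H6 : (w + 1) * (w + 1) <= (4 * (q * q)) * (w + 1)).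
{ assert (4 * (q * q) * w <= 4 * (q * q) * (w + 1)) by (apply Z.mul_le_mono_nonneg_l; [apply Z.mul_nonneg_nonneg; [lia|apply Z.mul_nonneg_nonneg; lia]|lia]).
  lia. }
apply (proj2 (Z.mul_le_mono_pos_r _ _ (w + 1) ltac:(lia))) in H6.
unfold k, w in *. lia.
Qed.
End AZ.
Lemma arith v k lam : k * (k-1) = (v-1) * lam -> 2 <= k - lam -> k <= v ->
  1 <= lam /\ v <= 4 * ((k-lam) * (k - lam)).
Proof.
move=> E Hq Hkv.
have Hk1 : (1 <= k)%coq_nat by apply/leP; lia.
have Hv1 : (1 <= v)%coq_nat by apply/leP; lia.
have Hlk : (lam <= k)%coq_nat by apply/leP; lia.
have Hkv' : (k <= v)%coq_nat by apply/leP.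
have E' := f_equal Z.of_nat E.
rewrite -!multE !Nat2Z.inj_mul !Nat2Z.inj_sub // in E'.
have [H1 H2] := @arithZ (Z.of_nat lam) (Z.of_nat (k - lam)) (Z.of_nat (v - k))
  ltac:(lia) ltac:(rewrite Nat2Z.inj_sub //; lia) ltac:(lia)
  ltac:(rewrite !Nat2Z.inj_sub //;
    rewrite (_ : (Z.of_nat lam + (Z.of_nat k - Z.of_nat lam))%Z = Z.of_nat k); last ring;
    rewrite (_ : (Z.of_nat k + (Z.of_nat v - Z.of_nat k))%Z = Z.of_nat v); last ring;
    exact E').
split; first lia.
apply/leP; apply Nat2Z.inj_le.
rewrite -!multE !Nat2Z.inj_mul.
move: H2; rewrite !Nat2Z.inj_sub //.
lia.
Qed.

Section R1.
Local Open Scope R_scope.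
Lemma real_bound (h e m q v : R) : 0 < q -> 1 <= v -> v <= 4*q*q -> h*q <= 2*v + q ->
  0 <= e -> e <= 4*m -> m * ln 2 <= ln (2*v) -> 0 <= h -> 0 <= m ->
  h * e <= 20 / ln 2 * sqrt (2*v) * ln (2*v).
Proof.
intros Hq Hv Hvq Hh He0 He Hm Hh0 Hm0.
assert (Hl2 : 0 < ln 2) by (pose proof ln_lt_2; lra).
set (sv := sqrt v).
assert (Hsv : sv * sv = v) by (apply sqrt_sqrt; lra).
assert (Hsv1 : 1 <= sv) by (unfold sv; rewrite <- sqrt_1; apply sqrt_le_1_alt; lra).
assert (Hsvq : sv <= 2 * q).
{ unfold sv. have E := sqrt_square (2*q) ltac:(lra). rewrite -E. apply sqrt_le_1_alt. lra. }
assert (Hh5 : h <= 5 * sv).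
{ assert (q * (h - 5 * sv) <= 0) by nra. nra. }
assert (Hs2 : sv <= sqrt (2*v)) by (apply sqrt_le_1_alt; lra).
assert (Hmm : m <= ln (2*v) / ln 2).
{ apply (Rmult_le_reg_r (ln 2)); [lra|]. unfold Rdiv. rewrite Rmult_assoc Rinv_l; lra. }
assert (0 <= m * ln 2) by (apply Rmult_le_pos; lra).
assert (Hln : 0 <= ln (2*v)) by lra.
assert (h * e <= 5 * sv * (4 * m)).
{ apply Rmult_le_compat; lra. }
assert (5 * sv * (4 * m) <= 5 * sqrt (2*v) * (4 * (ln (2*v) / ln 2))).
{ apply Rmult_le_compat; try nra. }
assert (E : 5 * sqrt (2*v) * (4 * (ln (2*v) / ln 2)) = 20 / ln 2 * sqrt (2*v) * ln (2*v)) by (field; lra).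
lra.
Qed.
End R1.

Lemma walkS (V : finType) (adj : rel V) n u z w : adj u z -> walk adj n z w -> walk adj n.+1 u w.
Proof. by move=> a b; apply/existsP; exists z; apply/andP. Qed.

Lemma walk0 (V : finType) (adj : rel V) u : walk adj 0 u u.
Proof. exact: eqxx. Qed.

Lemma resolving_sub (V : finType) (adj : rel V) (S T : {set V}) :
  S \subset T -> resolving adj S -> resolving adj T.
Proof.
move=> ST /forallP H; apply/forallP => u; apply/forallP => w; apply/implyP => uw.
have := H u => /forallP /(_ w) /implyP /(_ uw) /existsP [s /andP [sS hs]].
by apply/existsP; exists s; rewrite hs (subsetP ST).
Qed.

Lemma metric_dim_le (V : finType) (adj : rel V) (S : {set V}) :
  resolving adj S -> metric_dim adj <= #|S|.
Proof.
move=> HS; rewrite /metric_dim.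
have HT : resolving adj [set: V] by apply: resolving_sub HS; exact: subsetT.
by case: (@arg_minnP _ [set: V] (resolving adj) (fun S => #|S|) HT) => A _; apply.
Qed.

Section Main.
Variables (v k lam : nat) (blk : 'I_v -> {set 'I_v}).
Hypothesis Hd : symmetric_design k lam blk.
Hypothesis Hk : 2 <= k.
Hypothesis Hl : 1 <= lam.
Hypothesis Hv : 2 <= v.

Local Notation V := ('I_v + 'I_v)%type.
Local Notation adj := (inc_adj blk).

Lemma cardV : #|{: V}| = 2 * v.
Proof. by rewrite card_sum card_ord; lia. Qed.

Lemma common_blk x y : x != y -> exists B, (x \in blk B) && (y \in blk B).
Proof.
have [_ Hpt _] := Hd => xy.
have : 0 < #|[set B | (x \in blk B) && (y \in blk B)]| by rewrite Hpt.
by case/card_gt0P => B; rewrite inE => HB; exists B.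
Qed.

Lemma common_pt B B' : B != B' -> exists z, (z \in blk B) && (z \in blk B').
Proof.
have [_ _ Hbl] := Hd => BB.
have : 0 < #|blk B :&: blk B'| by rewrite Hbl.
by case/card_gt0P => z; rewrite inE => Hz; exists z.
Qed.

Lemma some_blk x : exists B, x \in blk B.
Proof.
have : 0 < #|[set B | x \in blk B]| by rewrite (r_eq Hd Hk); lia.
by case/card_gt0P => B; rewrite inE => HB; exists B.
Qed.

Lemma reach (u w : V) : exists n, n <= 3 /\ walk adj n u w.
Proof.
case: u => [x|B]; case: w => [y|B'].
- case: (eqVneq x y) => [->|xy]; first by exists 0; split => //; exact: walk0.
  have [B /andP [xB yB]] := common_blk xy.
  exists 2; split => //.
  apply: (@walkS _ _ _ _ (inr B)) => //.
  by apply: (@walkS _ _ _ _ (inl y)) => //; exact: walk0.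
- case: (boolP (x \in blk B')) => xB'.
    by exists 1; split => //; apply: (@walkS _ _ _ _ (inr B')) => //; exact: walk0.
  have [B1 xB1] := some_blk x.
  have B1B' : B1 != B' by apply/eqP => E; move: xB'; rewrite -E xB1.
  have [z /andP [z1 z2]] := common_pt B1B'.
  exists 3; split => //.
  apply: (@walkS _ _ _ _ (inr B1)) => //.
  apply: (@walkS _ _ _ _ (inl z)) => //.
  by apply: (@walkS _ _ _ _ (inr B')) => //; exact: walk0.
- case: (boolP (y \in blk B)) => yB.
    by exists 1; split => //; apply: (@walkS _ _ _ _ (inl y)) => //; exact: walk0.
  have [B1 yB1] := some_blk y.
  have BB1 : B != B1 by apply/eqP => E; move: yB; rewrite E yB1.
  have [z /andP [z1 z2]] := common_pt BB1.
  exists 3; split => //.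
  apply: (@walkS _ _ _ _ (inl z)) => //.
  apply: (@walkS _ _ _ _ (inr B1)) => //.
  by apply: (@walkS _ _ _ _ (inl y)) => //; exact: walk0.
- case: (eqVneq B B') => [->|BB]; first by exists 0; split => //; exact: walk0.
  have [z /andP [z1 z2]] := common_pt BB.
  exists 2; split => //.
  apply: (@walkS _ _ _ _ (inl z)) => //.
  by apply: (@walkS _ _ _ _ (inr B')) => //; exact: walk0.
Qed.

Lemma small_lt n : n <= 3 -> n < #|{: V}|.
Proof. by rewrite cardV; lia. Qed.

Lemma gdist_reach (u w : V) : walk adj (gdist adj u w) u w.
Proof.
have [n [Hn Hw]] := reach u w.
by have [] := walk_gdist (small_lt Hn) Hw.
Qed.

Lemma gdist_nadj' (u w : V) : ~~ adj u w -> gdist adj u w != 1.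
Proof.
have [n [Hn Hw]] := reach u w.
exact: gdist_nadj (small_lt Hn) Hw.
Qed.

Lemma gdist_adj' (u w : V) : u != w -> adj u w -> gdist adj u w = 1.
Proof. apply: gdist_adj; rewrite cardV; lia. Qed.

Definition sepf (s : V) (p : V * V) :=
  (p.1 == p.2) || (gdist adj p.1 s != gdist adj p.2 s).

Lemma kv : k <= v.
Proof.
have [Hsz _ _] := Hd.
have x0 : 'I_v by exact: (Ordinal (ltnW Hv)).
by rewrite -(Hsz x0); apply: (leq_trans (max_card _)); rewrite card_ord.
Qed.

Lemma cov (p : V * V) : k - lam <= #|[set s | sepf s p]|.
Proof.
case: p => u w.
have allV : (forall s, sepf s (u, w)) -> k - lam <= #|[set s | sepf s (u, w)]|.
  move=> H; apply: (@leq_trans #|[set: V]|).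
    by rewrite cardsT cardV; have := kv; lia.
  by apply: subset_leq_card; apply/subsetP => s _; rewrite inE H.
case: (eqVneq u w) => [E|uw].
  by apply: allV => s; rewrite /sepf /= E eqxx.
have [Hsz Hpt Hbl] := Hd.
case: u uw allV => [x|B]; case: w => [y|B'] uw allV.
- have xy : x != y by apply: contraNneq uw => ->.
  rewrite -(sep_pts Hd Hk xy) -(card_imset _ (@inr_inj 'I_v 'I_v)).
  apply: subset_leq_card; apply/subsetP => s /imsetP [B HB ->].
  move: HB; rewrite !inE /sepf /= => /andP [xB yB].
  rewrite (gdist_adj' (u := inl x) (w := inr B)) //.
  by apply/orP; right; rewrite eq_sym; apply: gdist_nadj'.
- apply: allV => s; rewrite /sepf /=.
  apply/eqP => E.
  have h1 := walk_odd (gdist_reach (inl x) s).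
  have h2 := walk_odd (gdist_reach (inr B') s).
  by move: h1 h2; rewrite E => ->; case: s {E}.
- apply: allV => s; rewrite /sepf /=.
  apply/eqP => E.
  have h1 := walk_odd (gdist_reach (inr B) s).
  have h2 := walk_odd (gdist_reach (inl y) s).
  by move: h1 h2; rewrite E => ->; case: s {E}.
- have BB : B != B' by apply: contraNneq uw => ->.
  rewrite -(sep_blks Hd BB) -(card_imset _ (@inl_inj 'I_v 'I_v)).
  apply: subset_leq_card; apply/subsetP => s /imsetP [x Hx ->].
  move: Hx; rewrite !inE /sepf /= => /andP [xB' xB].
  rewrite (gdist_adj' (u := inr B) (w := inl x)) //.
  by apply/orP; right; rewrite eq_sym; apply: gdist_nadj'.
Qed.

End Main.

Lemma INR_muln a b : INR (a * b) = (INR a * INR b)%R.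
Proof. by rewrite -multE mult_INR. Qed.

Lemma INR_expn2 m : INR (2 ^ m) = (2 ^ m)%R.
Proof.
elim: m => [|m IH]; first by rewrite expn0 /=.
rewrite expnS INR_muln IH /=.
lra.
Qed.

Lemma ln_le' (a b : R) : (0 < a)%R -> (a <= b)%R -> (ln a <= ln b)%R.
Proof.
move=> Ha Hab; case: (Rle_lt_or_eq_dec _ _ Hab) => H.
  by apply: Rlt_le; apply: ln_increasing.
by rewrite H; apply: Rle_refl.
Qed.

Theorem corollary2p7 :
  exists C : R,
    forall (v k lam : nat) (blk : 'I_v -> {set 'I_v}),
      symmetric_design k lam blk ->
      (2 <= k - lam)%N ->
      let n := (2 * v)%N in
      (INR (metric_dim (inc_adj blk)) <= C * sqrt (INR n) * ln (INR n))%R.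
Proof.
exists (20 / ln 2)%R.
move=> v k lam blk Hd Hq n; rewrite /n.
have Hk : 2 <= k by lia.
case: (leqP v 1) => Hv.
  case: v blk Hd Hv {n} => [|[|v']] blk Hd Hv //.
    have Hres : resolving (inc_adj blk) set0.
      by apply/forallP => -[[]|[]].
    have := metric_dim_le Hres; rewrite cards0 leqn0 => /eqP ->.
    rewrite muln0 /= sqrt_0; lra.
  have [Hsz _ _] := Hd.
  have H2 := Hsz ord0.
  have H1 : #|blk ord0| <= 1 by rewrite -[X in _ <= X](card_ord 1); exact: max_card.
  lia.
have x0 : 'I_v by exact: (Ordinal (ltnW Hv)).
have kk := kk_eq Hd Hk x0.
have kvv := kv Hd Hv.
have [Hl1 H4] := arith kk Hq kvv.
set q := k - lam in Hq H4.
set h := (2 * v) %/ q + 1.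
set m := trunc_log 2 (2 * v).
set e := 2 * m.+1.
have qpos : 0 < q by lia.
have Hhq : h * q <= 2 * v + q.
  rewrite /h mulnDl mul1n leq_add2r; exact: leq_divM.
have hd : #|{: ('I_v + 'I_v)%type}| <= h * q.
  rewrite card_sum card_ord /h.
  have := ltn_ceil (2 * v) qpos; lia.
have m1 : 1 <= m by rewrite /m trunc_log_gt0 /=; lia.
have Hm2 : 2 ^ m <= 2 * v by apply: trunc_logP => //; lia.
have Hm3 : 2 * v < 2 ^ m.+1 by apply: trunc_log_ltn.
have HP : #|[set: ('I_v + 'I_v) * ('I_v + 'I_v)]| < 2 ^ e.
  rewrite cardsT card_prod card_sum card_ord.
  have -> : v + v = 2 * v by lia.
  have -> : 2 ^ e = 2 ^ m.+1 * 2 ^ m.+1 by rewrite -expnD /e; congr (_ ^ _); lia.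
  by apply: ltn_mul.
have hpos : 0 < h by rewrite /h addn1.
have [S [HS HS0]] := @cover_exp _ _ (sepf blk) q h (inl x0) hd
  (@cov v k lam blk Hd Hk Hl1 Hv) e hpos [set: _] HP.
have Hres : resolving (inc_adj blk) S.
  apply/forallP => u; apply/forallP => w; apply/implyP => uw.
  have Hn : (u, w) \notin uncov (sepf blk) [set: _] S by rewrite HS0 inE.
  case: (boolP [exists s in S, gdist (inc_adj blk) u s != gdist (inc_adj blk) w s]) => // Hno.
  exfalso; move/negP: Hn; apply.
  rewrite inE in_setT /=; apply/forallP => s; apply/implyP => sS.
  rewrite /sepf /= (negbTE uw) /=.
  apply/negP => Hs; move/negP: Hno; apply; apply/existsP; exists s; by rewrite sS.
have Hmd := metric_dim_le Hres.
apply: (Rle_trans _ (INR (h * e))); first by apply: le_INR; apply/leP; lia.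
rewrite INR_muln INR_muln.
have -> : INR 2 = 2%R by simpl; lra.
apply: (@real_bound (INR h) (INR e) (INR m) (INR q) (INR v)).
- by apply: lt_0_INR; apply/ltP.
- have := le_INR 1 v ltac:(apply/leP; lia); simpl; lra.
- have := le_INR _ _ (leP H4).
  rewrite !INR_muln => H.
  have E4 : INR 4 = 4%R by simpl; lra.
  rewrite E4 in H; nra.
- have := le_INR _ _ (leP Hhq).
  rewrite -plusE plus_INR INR_muln INR_muln => H.
  have E2 : INR 2 = 2%R by simpl; lra.
  rewrite E2 in H; lra.
- exact: pos_INR.
- have : e <= 4 * m by rewrite /e; lia.
  move/leP/le_INR; rewrite INR_muln => H.
  have E4 : INR 4 = 4%R by simpl; lra.
  rewrite E4 in H; lra.
- rewrite -ln_pow; last lra.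
  apply: ln_le'; first by apply: pow_lt; lra.
  rewrite -INR_expn2.
  have := le_INR _ _ (leP Hm2); rewrite INR_muln => H.
  have E2 : INR 2 = 2%R by simpl; lra.
  rewrite E2 in H; lra.
- exact: pos_INR.
- exact: pos_INR.
Qed.
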